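(* Let $(\mathbf F,\mathbf A)$ be an enriched cut-free Gentzen $ru$-frame or enriched cut-free Gentzen $ruz$-frame, with $\mathbf F=(G,T,N,K)$ (resp. $(G,T,N,K,\epsilon)$). Then for each of the following pairs, $(\mathbf F,\mathbf A)$ satisfies the rule if and only if the equation holds in $\mathbf F^+$: $[e]$ and $(\mathsf e)$; $[c]$ and $(\mathsf c)$; $[i]$ and $(\mathsf i)$; $[kc]$ and $(!\mathsf c)$; $[ke]$ and $(!\mathsf e)$; $[ki]$ and $(!\mathsf i)$; $[ka1]$ and $(!\mathsf a1)$; $[ka2]$ and $(!\mathsf a2)$.
   Context: Enriched $ru$-frame: $\mathbf F=(G,T,N,K)$ with $(G,\cdot,\varepsilon)$ a unital groupoid (not necessarily associative), $T$ a set, $N\subseteq G\times T$ nuclear (for all $x,y\in G,z\in T$ there are $x\backslash\!\!\backslash z, z/\!\!/y\in T$ with $x\cdot y\,N\,z\iff y\,N\,x\backslash\!\!\backslash z\iff x\,N\,z/\!\!/y$), $K$ a sub-unital-groupoid of $G$ (contains $\varepsilon$, closed under $\cdot$); an enriched $ruz$-frame additionally has $\epsilon\in T$. $X^{\rhd}=\{t\in T\mid\forall x\in X\,xNt\}$, $Y^{\lhd}=\{g\in G\mid\forall y\in Y\,gNy\}$, $\gamma_N(X)=X^{\rhd\lhd}$. $\mathbf F^+$: universe the closed sets ($\gamma_N(X)=X$), $X\wedge Y=X\cap Y$, $X\vee Y=\gamma_N(X\cup Y)$, $X\cdot Y=\gamma_N(X\circ Y)$ with $X\circ Y=\{x\cdot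 y\mid x\in X,y\in Y\}$, $X\backslash Y=\{z\mid X\circ\{z\}\subseteq Y\}$, $Y/X=\{z\mid \{z\}\circ X\subseteq Y\}$, $!X=\gamma_N(X\cap K)$, unit $\gamma_N(\{\varepsilon\})$, and in the $ruz$ case zero $\{\epsilon\}^{\lhd}$. Enriched cut-free Gentzen $ru$-frame: a pair $(\mathbf F,\mathbf A)$ with $\mathbf F$ an enriched $ru$-frame and $\mathbf A$ a partial algebra in $\{\wedge,\vee,\cdot,\backslash,/,!,1\}$, together with injections of $A$ into $G$ and into $T$ and of $A^!=\{!^{\mathbf A}a\mid a\in\operatorname{dom}!^{\mathbf A}\}$ into $K$ (elements of $A$ are identified with their images), such that for all $x,y\in G$, $z\in T$, $a,a_1,a_2,b\in A$, $k\in K$ (whenever the displayed operations of $\mathbf A$ are defined): $\varepsilon\,N\,1^{\mathbf A}$; $a\,N\,a$; $\varepsilon Nz\Rightarrow 1^{\mathbf A}Nz$; $a\cdot b\,N\,z\Rightarrow a\cdot^{\mathbf A}b\,N\,z$; $xNa,\,yNb\Rightarrow x\cdot y\,N\,a\cdot^{\mathbf A}b$; $xNa,\,bNz\Rightarrow x\cdot(a\backslash^{\mathbf A}b)\,N\,z$; $a\cdot x\,N\,b\Rightarrow x\,N\,a\backslash^{\mathbf A}b$; $xNa,\,bNz\Rightarrow (b/^{\mathbf A}a)\cdot x\,N\,z$; $x\cdot a\,N\,b\Rightarrow x\,N\,b/^{\mathbf A}a$; $a_iNz\Rightarrow a_1\wedge^{\mathbf A}a_2\,N\,z$; $xNa,\,xNb\Rightarrow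 x\,N\,a\wedge^{\mathbf A}b$; $aNz,\,bNz\Rightarrow a\vee^{\mathbf A}b\,N\,z$; $xNa_i\Rightarrow x\,N\,a_1\vee^{\mathbf A}a_2$; $aNz\Rightarrow !^{\mathbf A}a\,N\,z$; $kNa\Rightarrow k\,N\,!^{\mathbf A}a$. An enriched cut-free Gentzen $ruz$-frame uses an enriched $ruz$-frame, $\mathbf A$ a partial algebra additionally with $0$, and also requires $0^{\mathbf A}N\epsilon$ and $xN\epsilon\Rightarrow xN0^{\mathbf A}$. Rules (for all $x,y\in G$, $z\in T$, $k\in K$): $[e]$ $x\cdot y\,N\,z\Rightarrow y\cdot x\,N\,z$; $[c]$ $x\cdot x\,N\,z\Rightarrow xNz$; $[i]$ $\varepsilon Nz\Rightarrow xNz$; $[kc]$ $k\cdot k\,N\,z\Rightarrow kNz$; $[ki]$ $\varepsilon Nz\Rightarrow kNz$; $[ke]$ $k\cdot y\,N\,z\iff y\cdot k\,N\,z$; $[ka1]$ $k\cdot(x\cdot y)\,N\,z\iff (k\cdot x)\cdot y\,N\,z$; $[ka2]$ $x\cdot(y\cdot k)\,N\,z\iff (x\cdot y)\cdot k\,N\,z$. Equations: $(\mathsf e)$ $x\cdot y\le y\cdot x$; $(\mathsf c)$ $x\le x\cdot x$; $(\mathsf i)$ $x\le 1$; $(!\mathsf i)$ $!x\le 1$; $(!\mathsf c)$ $!x\le !x\cdot !x$; $(!\mathsf e)$ $!x\cdot y=y\cdot !x$; $(!\mathsf a1)$ $!x\cdot(y\cdot z)=(!x\cdot y)\cdot z$;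 $(!\mathsf a2)$ $x\cdot(y\cdot !z)=(x\cdot y)\cdot !z$ (in $\mathbf F^+$, $\le$ is $\subseteq$). *)

(* Defs.v *)
Record ruFrame := {
  G : Type;
  T : Type;
  op : G -> G -> G;
  eps : G;
  N : G -> T -> Prop;
  K : G -> Prop;
  (* (G, op, eps) is a unital groupoid (not necessarily associative) *)
  op_unit_l : forall x, op eps x = x;
  op_unit_r : forall x, op x eps = x;
  ldivT : G -> T -> T;
  rdivT : T -> G -> T;
  nuclear_l : forall x y z, N (op x y) z <-> N y (ldivT x z);
  nuclear_r : forall x y z, N (op x y) z <-> N x (rdivT z y);
  K_eps : K eps;
  K_op : forall x y, K x -> K y -> K (op x y)
}.

Arguments op {_} _ _.
Arguments eps {_}.
Arguments N {_} _ _.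
Arguments K {_} _.

(* Enriched cut-free Gentzen ru-frame over F: a partial algebra A (partial
   operations as option-valued functions; constant 1 possibly undefined),
   injections of A into G and T, A^! mapped into K, and the listed conditions. *)
Record gentzenRU (F : ruFrame) := {
  A : Type;
  meetA : A -> A -> option A;
  joinA : A -> A -> option A;
  mulA  : A -> A -> option A;
  ldivA : A -> A -> option A;   (* ldivA a b = a \ b *)
  rdivA : A -> A -> option A;   (* rdivA b a = b / a *)
  bangA : A -> option A;
  oneA  : option A;
  inG : A -> G F;
  inT : A -> T F;
  inG_inj : forall a b, inG a = inG b -> a = b;
  inT_inj : forall a b, inT a = inT b -> a = b;
  bang_K : forall a c, bangA a = Some c -> K (inG c);
  g_one1 : forall u, oneA = Some u -> N eps (inT u);
  g_id : forall a, N (inG a) (inT a);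
  g_one2 : forall u z, oneA = Some u -> N eps z -> N (inG u) z;
  g_mulL : forall a b c z, mulA a b = Some c ->
      N (op (inG a) (inG b)) z -> N (inG c) z;
  g_mulR : forall a b c x y, mulA a b = Some c ->
      N x (inT a) -> N y (inT b) -> N (op x y) (inT c);
  g_ldivL : forall a b c x z, ldivA a b = Some c ->
      N x (inT a) -> N (inG b) z -> N (op x (inG c)) z;
  g_ldivR : forall a b c x, ldivA a b = Some c ->
      N (op (inG a) x) (inT b) -> N x (inT c);
  g_rdivL : forall a b c x z, rdivA b a = Some c ->
      N x (inT a) -> N (inG b) z -> N (op (inG c) x) z;
  g_rdivR : forall a b c x, rdivA b a = Some c ->
      N (op x (inG a)) (inT b) -> N x (inT c);
  g_meetL : forall a1 a2 c z, meetA a1 a2 = Some c ->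
      (N (inG a1) z \/ N (inG a2) z) -> N (inG c) z;
  g_meetR : forall a b c x, meetA a b = Some c ->
      N x (inT a) -> N x (inT b) -> N x (inT c);
  g_joinL : forall a b c z, joinA a b = Some c ->
      N (inG a) z -> N (inG b) z -> N (inG c) z;
  g_joinR : forall a1 a2 c x, joinA a1 a2 = Some c ->
      (N x (inT a1) \/ N x (inT a2)) -> N x (inT c);
  g_bangL : forall a c z, bangA a = Some c -> N (inG a) z -> N (inG c) z;
  g_bangR : forall a c k, bangA a = Some c -> K k -> N k (inT a) -> N k (inT c)
}.

(* Enriched cut-free Gentzen ruz-frame: an enriched ruz-frame is an ru-frame F
   together with epsT : T F; the partial algebra additionally has 0. *)
Record gentzenRUZ (F : ruFrame) (epsT : T F) := {
  gru : gentzenRU F;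
  zeroA : option (A F gru);
  g_zero1 : forall u, zeroA = Some u -> N (inG F gru u) epsT;
  g_zero2 : forall u x, zeroA = Some u -> N x epsT -> N x (inT F gru u)
}.

Section Plus.
Variable F : ruFrame.

Definition setG := G F -> Prop.
Definition subsetG (X Y : setG) : Prop := forall g, X g -> Y g.
Definition seteqG (X Y : setG) : Prop := forall g, X g <-> Y g.

Definition rhd (X : setG) : T F -> Prop := fun t => forall x, X x -> N x t.
Definition lhd (Y : T F -> Prop) : setG := fun g => forall t, Y t -> N g t.
Definition gammaN (X : setG) : setG := lhd (rhd X).
Definition closed (X : setG) : Prop := seteqG (gammaN X) X.

Definition circ (X Y : setG) : setG :=
  fun g => exists x y, X x /\ Y y /\ g = op x y.
Definition prodP (X Y : setG) : setG := gammaN (circ X Y).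
Definition bangP (X : setG) : setG := gammaN (fun g => X g /\ K g).
Definition oneP : setG := gammaN (fun g => g = @eps F).

Definition rule_e := forall (x y : G F) (z : T F), N (op x y) z -> N (op y x) z.
Definition rule_c := forall (x : G F) (z : T F), N (op x x) z -> N x z.
Definition rule_i := forall (x : G F) (z : T F), N eps z -> N x z.
Definition rule_kc := forall (k : G F) (z : T F), K k -> N (op k k) z -> N k z.
Definition rule_ki := forall (k : G F) (z : T F), K k -> N eps z -> N k z.
Definition rule_ke := forall (k y : G F) (z : T F), K k -> (N (op k y) z <-> N (op y k) z).
Definition rule_ka1 := forall (k x y : G F) (z : T F), K k ->
  (N (op k (op x y)) z <-> N (op (op k x) y) z).
Definition rule_ka2 := forall (k x y : G F) (z : T F), K k ->
  (N (op x (op y k)) z <-> N (op (op x y) k) z).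

(* Equations holding in F^+ (variables range over closed sets; <= is inclusion) *)
Definition eq_e := forall X Y, closed X -> closed Y ->
  subsetG (prodP X Y) (prodP Y X).
Definition eq_c := forall X, closed X -> subsetG X (prodP X X).
Definition eq_i := forall X, closed X -> subsetG X oneP.
Definition eq_bi := forall X, closed X -> subsetG (bangP X) oneP.
Definition eq_bc := forall X, closed X ->
  subsetG (bangP X) (prodP (bangP X) (bangP X)).
Definition eq_be := forall X Y, closed X -> closed Y ->
  seteqG (prodP (bangP X) Y) (prodP Y (bangP X)).
Definition eq_ba1 := forall X Y Z, closed X -> closed Y -> closed Z ->
  seteqG (prodP (bangP X) (prodP Y Z)) (prodP (prodP (bangP X) Y) Z).
Definition eq_ba2 := forall X Y Z, closed X -> closed Y -> closed Z ->
  seteqG (prodP X (prodP Y (bangP Z))) (prodP (prodP X Y) (bangP Z)).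

Definition correspondences : Prop :=
  (rule_e <-> eq_e) /\ (rule_c <-> eq_c) /\ (rule_i <-> eq_i) /\
  (rule_kc <-> eq_bc) /\ (rule_ke <-> eq_be) /\ (rule_ki <-> eq_bi) /\
  (rule_ka1 <-> eq_ba1) /\ (rule_ka2 <-> eq_ba2).

End Plus.

(* Main.v *)
Require Import Defs.

Section Proofs.
Variable F : ruFrame.

Definition Pr (x : G F) : setG F := gammaN F (fun g => g = x).

Lemma nlI x y z : N y (ldivT F x z) -> N (op x y) z.
Proof. apply (nuclear_l F). Qed.
Lemma nlE x y z : N (op x y) z -> N y (ldivT F x z).
Proof. apply (nuclear_l F). Qed.
Lemma nrI x y z : N x (rdivT F z y) -> N (op x y) z.
Proof. apply (nuclear_r F). Qed.
Lemma nrE x y z : N (op x y) z -> N x (rdivT F z y).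
Proof. apply (nuclear_r F). Qed.

Lemma gam_ext (S : setG F) g : S g -> gammaN F S g.
Proof. intros H t Ht. apply Ht; exact H. Qed.

Lemma gam_min (S S' : setG F) : (forall s, S s -> gammaN F S' s) ->
  forall u, gammaN F S u -> gammaN F S' u.
Proof. intros H u Hu t Ht. apply Hu. intros s Hs. apply H; auto. Qed.

Lemma closed_gam S : closed F (gammaN F S).
Proof. intros g; split. apply gam_min; auto. apply gam_ext. Qed.

Lemma Pself x : Pr x x.
Proof. intros t Ht. apply Ht; reflexivity. Qed.

Lemma Pup a b t : Pr a b -> N a t -> N b t.
Proof. intros Hb Ht. apply Hb. intros s ->. exact Ht. Qed.

Lemma M2 x y x' y' z : N (op x y) z -> Pr x x' -> Pr y y' -> N (op x' y') z.
Proof.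
  intros H Hx Hy. apply nrI. apply (Pup x); auto. apply nrE.
  apply nlI. apply (Pup y); auto. apply nlE. exact H.
Qed.

Lemma bang_sub k a : bangP F (Pr k) a -> Pr k a.
Proof. apply gam_min. intros s [H _]; exact H. Qed.

Lemma bself k : K k -> bangP F (Pr k) k.
Proof. intros HK. apply gam_ext. split; [apply Pself|exact HK]. Qed.

Lemma prodPr x y u : prodP F (Pr x) (Pr y) u -> Pr (op x y) u.
Proof.
  apply gam_min. intros s [x'[y'[Hx[Hy ->]]]] t Ht.
  eapply M2; [apply Ht; reflexivity| exact Hx | exact Hy].
Qed.

Lemma cPr x : closed F (Pr x). Proof. apply closed_gam. Qed.
Lemma cB X : closed F (bangP F X). Proof. apply closed_gam. Qed.

Lemma corr : correspondences F.
Proof.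
  unfold correspondences. repeat (match goal with |- _ /\ _ => split | |- _ <-> _ => split end).
  -
    intros He X Y _ _ g Hg t Ht. apply Hg. intros w [x [y [Hx [Hy ->]]]].
    apply He. apply Ht. exists y, x. auto.
  - intros He x y z H.
    assert (H1 : prodP F (Pr y) (Pr x) (op y x)).
    { apply gam_ext. exists y, x. repeat split; auto using Pself. }
    apply (He _ _ (cPr y) (cPr x) _ H1 z).
    intros w [a [b [Ha [Hb ->]]]]. eapply M2; eauto.
  - intros Hc X _ x Hx t Ht. apply Hc. apply Ht. exists x, x; auto.
  - intros Hc x z H. apply (Hc (Pr x) (cPr x) x (Pself x)).
    intros w [a [b [Ha [Hb ->]]]]. eapply M2; eauto.
  - intros Hi X _ x Hx t Ht. apply Hi. apply Ht. reflexivity.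
  - intros Hi x z H. apply (Hi (Pr x) (cPr x) x (Pself x)). intros w ->. exact H.
  - intros Hk X _. unfold subsetG, bangP. apply gam_min.
    intros k [HX HK] t Ht. apply Hk; auto. apply Ht.
    exists k, k. split; [|split]; try reflexivity; apply gam_ext; auto.
  - intros Hb k z HK H.
    apply (Hb _ (cPr k) k (bself k HK) z).
    intros w [a [b [Ha [Hb' ->]]]].
    eapply M2; [exact H | apply bang_sub; exact Ha | apply bang_sub; exact Hb'].
  -
    intros Hk X Y _ _ g; split; intros Hg t Ht; apply Hg; clear Hg g.
    + intros w [b [y [Hb [Hy ->]]]].
      apply nrI. apply Hb. intros s [HX HK]. apply nrE.
      apply (proj2 (Hk s y t HK)). apply Ht. exists y, s.
      repeat split; auto. apply gam_ext; auto.
    + intros w [y [b [Hy [Hb ->]]]].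
      apply nlI. apply Hb. intros s [HX HK]. apply nlE.
      apply (proj1 (Hk s y t HK)). apply Ht. exists s, y.
      repeat split; auto. apply gam_ext; auto.
  - intros Hb k y z HK; split; intros H.
    + assert (H1 : prodP F (Pr y) (bangP F (Pr k)) (op y k)).
      { apply gam_ext. exists y, k. repeat split; auto using Pself, bself. }
      apply (proj2 (Hb (Pr k) (Pr y) (cPr k) (cPr y) (op y k)) H1 z).
      intros w [b [y' [Hb' [Hy ->]]]].
      eapply M2; [exact H | apply bang_sub; exact Hb' | exact Hy].
    + assert (H1 : prodP F (bangP F (Pr k)) (Pr y) (op k y)).
      { apply gam_ext. exists k, y. repeat split; auto using Pself, bself. }
      apply (proj1 (Hb (Pr k) (Pr y) (cPr k) (cPr y) (op k y)) H1 z).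
      intros w [y' [b [Hy [Hb' ->]]]].
      eapply M2; [exact H | exact Hy | apply bang_sub; exact Hb'].
  - intros Hi X _. unfold subsetG, bangP, oneP. apply gam_min.
    intros s [_ HK] t Ht. apply Hi; [exact HK | apply Ht; reflexivity].
  - intros Hi k z HK H. apply (Hi (Pr k) (cPr k) k (bself k HK)).
    intros w ->; exact H.
  -
    intros Ha X Y Z _ _ _ g; split; intros Hg t Ht; apply Hg; clear Hg g.
    + intros w [b [v [Hb [Hv ->]]]].
      apply nrI. apply Hb. intros k [HX HK]. apply nrE.
      apply nlI. apply Hv. intros u [y [z' [Hy [Hz ->]]]]. apply nlE.
      apply (proj2 (Ha k y z' t HK)). apply Ht. exists (op k y), z'.
      split; [|split; auto].
      apply gam_ext. exists k, y. repeat split; auto. apply gam_ext; auto.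
    + intros w [u [z' [Hu [Hz ->]]]].
      apply nrI. apply Hu. intros w' [b [y [Hb [Hy ->]]]]. apply nrE.
      apply nrI. apply nrI. apply Hb. intros k [HX HK]. apply nrE. apply nrE.
      apply (proj1 (Ha k y z' t HK)). apply Ht. exists k, (op y z').
      split; [apply gam_ext; auto|split; [|reflexivity]].
      apply gam_ext. exists y, z'. auto.
  - intros Ha k x y z HK; split; intros H.
    + assert (H1 : prodP F (prodP F (bangP F (Pr k)) (Pr x)) (Pr y) (op (op k x) y)).
      { apply gam_ext. exists (op k x), y. split; [|split; auto using Pself].
        apply gam_ext. exists k, x. repeat split; auto using Pself, bself. }
      apply (proj2 (Ha _ _ _ (cPr k) (cPr x) (cPr y) _) H1 z).
      intros w [b [v [Hb [Hv ->]]]].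
      apply nlI. apply Hv. intros u [x' [y' [Hx [Hy ->]]]]. apply nlE.
      apply nrI. apply (Pup k); [apply bang_sub; exact Hb|]. apply nrE.
      apply nlI. eapply M2; [apply nlE; exact H | exact Hx | exact Hy].
    + assert (H1 : prodP F (bangP F (Pr k)) (prodP F (Pr x) (Pr y)) (op k (op x y))).
      { apply gam_ext. exists k, (op x y). split; [apply bself; auto|split; auto].
        apply gam_ext. exists x, y. repeat split; auto using Pself. }
      apply (proj1 (Ha _ _ _ (cPr k) (cPr x) (cPr y) _) H1 z).
      intros w [u [y' [Hu [Hy ->]]]].
      apply nrI. apply Hu. intros w' [b [x' [Hb [Hx ->]]]]. apply nrE.
      apply nrI. eapply M2; [| apply bang_sub; exact Hb | exact Hx].
      apply nrE. eapply M2; [exact H | apply Pself | exact Hy].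
  -
    intros Ha X Y Z _ _ _ g; split; intros Hg t Ht; apply Hg; clear Hg g.
    + intros w [x [v [Hx [Hv ->]]]].
      apply nlI. apply Hv. intros u [y [b [Hy [Hb ->]]]]. apply nlE.
      apply nlI. apply nlI. apply Hb. intros k [HZ HK]. apply nlE. apply nlE.
      apply (proj2 (Ha k x y t HK)). apply Ht. exists (op x y), k.
      split; [|split; [apply gam_ext; auto|reflexivity]].
      apply gam_ext. exists x, y. auto.
    + intros w [u [b [Hu [Hb ->]]]].
      apply nlI. apply Hb. intros k [HZ HK]. apply nlE.
      apply nrI. apply Hu. intros w' [x [y [Hx [Hy ->]]]]. apply nrE.
      apply (proj1 (Ha k x y t HK)). apply Ht. exists x, (op y k).
      split; auto. split; [|reflexivity].
      apply gam_ext. exists y, k. repeat split; auto. apply gam_ext; auto.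
  - intros Ha k x y z HK; split; intros H.
    + assert (H1 : prodP F (prodP F (Pr x) (Pr y)) (bangP F (Pr k)) (op (op x y) k)).
      { apply gam_ext. exists (op x y), k. split; [|split; auto using bself].
        apply gam_ext. exists x, y. repeat split; auto using Pself. }
      apply (proj2 (Ha _ _ _ (cPr x) (cPr y) (cPr k) _) H1 z).
      intros w [x' [v [Hx [Hv ->]]]].
      apply nlI. apply Hv. intros u [y' [b [Hy [Hb ->]]]]. apply nlE.
      apply nrI. apply (Pup x); [exact Hx|]. apply nrE.
      apply nlI. eapply M2; [apply nlE; exact H | exact Hy | apply bang_sub; exact Hb].
    + assert (H1 : prodP F (Pr x) (prodP F (Pr y) (bangP F (Pr k))) (op x (op y k))).
      { apply gam_ext. exists x, (op y k). split; [apply Pself|split; auto].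
        apply gam_ext. exists y, k. repeat split; auto using Pself, bself. }
      apply (proj1 (Ha _ _ _ (cPr x) (cPr y) (cPr k) _) H1 z).
      intros w [u [b [Hu [Hb ->]]]].
      eapply M2; [exact H | apply prodPr; exact Hu | apply bang_sub; exact Hb].
Qed.

End Proofs.

Theorem mainTheorem10 :
  (forall (F : ruFrame) (GA : gentzenRU F), correspondences F) /\
  (forall (F : ruFrame) (epsT : T F) (GA : gentzenRUZ F epsT), correspondences F).
Proof. split; intros; apply corr. Qed.
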